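(* In the five-machine configuration near a central mass (Fermi normal coordinates about a radial Schwarzschild geodesic with $\mu=GM/(c^2r^3)$, $r$ treated as constant; $B_1,B_2$ symmetric on the $x$-axis, $A_0,A_1,A_2$ equally spaced on a circle in the plane $x=0$; seven two-way channels between $B_j$ and $A_n$ and between $B_1,B_2$ with null phases and one-way transit of $2N$ cycles; the three channels between the $A_n$ with transit $3N$ cycles and common reception phase $\phi$), let $L\approx 2Np_\tau c$ denote the proper radar distance between $B_1$ and $B_2$. If the reception phase $\phi$ of the channels $\overrightarrow{A_nA_{n\pm1}}$ is to satisfy the logical-synchronization requirement $|\phi|<1/2$, then, to first order in curvature, $$p_\tau>\frac{27\,GM\,L^3}{32\,r^3c^3},$$ so that with an alphabet of $b$ bits per character the bit rate of every channel in the cluster is bounded by $b/p_\tau<\dfrac{32\,b\,r^3c^3}{27\,GM\,L^3}$.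
   Context: An open machine is modeled as a smooth future-pointing timelike worldline parametrized by its adjustable clock reading; readings are written $m.\phi$ with integer $m$ and phase $\phi\in(-1/2,1/2]$; a tick occurs at each integer reading and one character is transmitted per cycle. Signals propagate along null geodesics. A channel $\overrightarrow{AB}$ is a set of pairs (transmission $A$-reading, reception $B$-reading). In this configuration, to first order in curvature, the common phase satisfies $\phi=-27GMN^3p_\tau^2/(8r^3)$, where $p_\tau$ is the proper clock period of $B_1$. Logical synchronization demands that every reception phase satisfy $|\phi|<(1-\eta)/2$ for some $\eta>0$. *)

(* Defs.v *)
From Stdlib Require Import Reals Lra.
Open Scope R_scope.

(* Common reception phase of the channels A_n -> A_(n+-1), to first order in
   curvature (given in the paper's setup):
   phi = -27 G M N^3 p_tau^2 / (8 r^3), N = half the one-way transit in cycles. *)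
Definition common_phase (G M r : R) (N : nat) (p_tau : R) : R :=
  - (27 * G * M * (INR N) ^ 3 * p_tau ^ 2) / (8 * r ^ 3).

Definition radar_distance (N : nat) (p_tau c : R) : R := 2 * INR N * p_tau * c.

Definition phase_ok (phi : R) : Prop := Rabs phi < 1 / 2.

(* Main.v *)
Require Import Defs.
From Stdlib Require Import Reals Lra Lia.
Open Scope R_scope.

Theorem mainTheorem5 (G M r c p_tau : R) (N b : nat)
  (hG : 0 < G) (hM : 0 < M) (hr : 0 < r) (hc : 0 < c) (hp : 0 < p_tau)
  (hN : (0 < N)%nat) (hb : (0 < b)%nat)
  (hphi : phase_ok (common_phase G M r N p_tau)) :
  let L := radar_distance N p_tau c in
  p_tau > 27 * G * M * L ^ 3 / (32 * r ^ 3 * c ^ 3) /\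
  INR b / p_tau < 32 * INR b * r ^ 3 * c ^ 3 / (27 * G * M * L ^ 3).
Proof.
  intros L. unfold L, radar_distance.
  unfold phase_ok, common_phase in hphi.
  assert (hn : 0 < INR N) by (apply lt_0_INR; lia).
  assert (hbr : 0 < INR b) by (apply lt_0_INR; lia).
  set (K := 27 * G * M * INR N ^ 3 * p_tau ^ 2 / (8 * r ^ 3)).
  assert (hK : 0 < K).
  { unfold K. apply Rdiv_lt_0_compat; [|apply Rmult_lt_0_compat; [lra|apply pow_lt; lra]].
    repeat apply Rmult_lt_0_compat; try lra; apply pow_lt; lra. }
  assert (hK2 : K < 1/2).
  { replace (- (27 * G * M * INR N ^ 3 * p_tau ^ 2) / (8 * r ^ 3)) with (- K) in hphi
      by (unfold K; field; lra).
    rewrite Rabs_Ropp, Rabs_pos_eq in hphi; lra. }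
  assert (E1 : 27 * G * M * (2 * INR N * p_tau * c) ^ 3 / (32 * r ^ 3 * c ^ 3) = 2 * K * p_tau).
  { unfold K. field. lra. }
  assert (E2 : 32 * INR b * r ^ 3 * c ^ 3 / (27 * G * M * (2 * INR N * p_tau * c) ^ 3)
              = INR b / (2 * K * p_tau)).
  { assert (0 < (2 * INR N * p_tau * c) ^ 3) by (apply pow_lt; repeat apply Rmult_lt_0_compat; lra).
    rewrite <- E1. field. repeat split; try lra. }
  rewrite E1, E2. split.
  - nra.
  - apply Rmult_lt_compat_l; [lra|]. apply Rinv_lt_contravar.
    + apply Rmult_lt_0_compat; nra.
    + nra.
Qed.
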